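(* Let $n\ge 1$ and let $[v_0,\dots,v_n]$ and $[v'_0,\dots,v'_n]$ be (non-degenerate) $n$-simplices in $\mathbb{R}^n$. The following are equivalent: (i) there are real numbers $u_0,\dots,u_n$ such that $|v'_i-v'_j| = e^{\frac12(u_i+u_j)}|v_i-v_j|$ for all two-element subsets $\{i,j\}\subseteq\{0,\dots,n\}$; (ii) there is a Möbius transformation $T$ of $\widehat{\mathbb{R}^n}$ such that $v'_i=T(v_i)$ for all $i\in\{0,\dots,n\}$.
   Context: $\widehat{\mathbb{R}^n}=\mathbb{R}^n\cup\{\infty\}$ is the one-point compactification of $\mathbb{R}^n$. A Möbius transformation of $\widehat{\mathbb{R}^n}$ is a composition of inversions in (Euclidean) hyperspheres and reflections in hyperplanes. $|\cdot|$ denotes the Euclidean norm. *)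

(* Defs.v *)
From Stdlib Require Import Reals Lra.
From Stdlib Require Fin.
Open Scope R_scope.

Definition point (n : nat) : Type := Fin.t n -> R.

Fixpoint fsum (n : nat) : (Fin.t n -> R) -> R :=
  match n return (Fin.t n -> R) -> R with
  | O => fun _ => 0
  | S m => fun f => f Fin.F1 + fsum m (fun k => f (Fin.FS k))
  end.

Definition dot {n : nat} (x y : point n) : R := fsum n (fun k => x k * y k).
Definition normsq {n : nat} (x : point n) : R := dot x x.
Definition pnorm {n : nat} (x : point n) : R := sqrt (normsq x).
Definition psub {n : nat} (x y : point n) : point n := fun k => x k - y k.
Definition edist {n : nat} (x y : point n) : R := pnorm (psub x y).

(* One-point compactification: None = infinity. *)
Definition ext (n : nat) : Type := option (point n).

Definition reflection {n : nat} (a : point n) (t : R) (p : ext n) : ext n :=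
  match p with
  | None => None
  | Some x => Some (fun k => x k - 2 * (dot a x - t) / normsq a * a k)
  end.

Definition inversion {n : nat} (c : point n) (r : R) (p : ext n) : ext n :=
  match p with
  | None => Some c
  | Some x =>
      if Req_EM_T (normsq (psub x c)) 0 then None
      else Some (fun k => c k + r ^ 2 * (x k - c k) / normsq (psub x c))
  end.

Inductive is_mobius (n : nat) : (ext n -> ext n) -> Prop :=
  | mob_refl : forall (a : point n) (t : R), a <> (fun _ => 0) ->
      is_mobius n (reflection a t)
  | mob_inv : forall (c : point n) (r : R), 0 < r ->
      is_mobius n (inversion c r)
  | mob_comp : forall f g, is_mobius n f -> is_mobius n g ->
      is_mobius n (fun p => f (g p)).

(* [v 0, ..., v n] is a non-degenerate n-simplex: the vertices are affinely
   independent. *)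
Definition nondeg_simplex (n : nat) (v : nat -> point n) : Prop :=
  forall lam : nat -> R,
    sum_f_R0 lam n = 0 ->
    (forall k : Fin.t n, sum_f_R0 (fun i => lam i * v i k) n = 0) ->
    forall i, (i <= n)%nat -> lam i = 0.

(* Main.v *)
Require Import Defs.
From Stdlib Require Import Reals.
From Stdlib Require Import Lra Lia FunctionalExtensionality Classical.
Open Scope R_scope.

Lemma fsum_ext n : forall f g : Fin.t n -> R, (forall k, f k = g k) -> fsum n f = fsum n g.
Proof. induction n; intros f g H; simpl; auto. rewrite H. f_equal. apply IHn. intros; apply H. Qed.

Lemma fsum_lin2 n : forall (f g : Fin.t n -> R) a b,
  fsum n (fun k => a * f k + b * g k) = a * fsum n f + b * fsum n g.
Proof. induction n; intros; simpl. ring. rewrite IHn. ring. Qed.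

Lemma fsum_lin3 n : forall (f g h : Fin.t n -> R) a b c,
  fsum n (fun k => a * f k + b * g k + c * h k) = a * fsum n f + b * fsum n g + c * fsum n h.
Proof. induction n; intros; simpl. ring. rewrite IHn. ring. Qed.

Lemma fsum_nonneg n : forall f : Fin.t n -> R, (forall k, 0 <= f k) -> 0 <= fsum n f.
Proof. induction n; intros f H; simpl. lra. specialize (IHn (fun k => f (Fin.FS k))).
  assert (0 <= f Fin.F1) by apply H. assert (0 <= fsum n (fun k => f (Fin.FS k))) by (apply IHn; intros; apply H). lra. Qed.

Lemma fsum_zero_inv n : forall f : Fin.t n -> R, (forall k, 0 <= f k) -> fsum n f = 0 -> forall k, f k = 0.
Proof. induction n; intros f H H0 k.
- inversion k.
- simpl in H0. assert (0 <= f Fin.F1) by apply H.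
  assert (0 <= fsum n (fun k => f (Fin.FS k))) by (apply fsum_nonneg; intros; apply H).
  apply (Fin.caseS' k (fun k => f k = 0)).
  + lra.
  + intros p. apply (IHn (fun k => f (Fin.FS k))); [intros; apply H | lra].
Qed.

Lemma normsq_nonneg {n} (x : point n) : 0 <= normsq x.
Proof. unfold normsq, dot. apply fsum_nonneg. intros; nra. Qed.

Lemma normsq_zero {n} (x : point n) : normsq x = 0 -> x = (fun _ => 0).
Proof. intros H. apply functional_extensionality. intros k.
  unfold normsq, dot in H. pose proof (fsum_zero_inv n (fun k => x k * x k) (fun k => ltac:(nra)) H k).
  simpl in H0. nra. Qed.

Lemma psub_zero {n} (x y : point n) : normsq (psub x y) = 0 -> x = y.
Proof. intros H. apply normsq_zero in H. apply functional_extensionality; intros k.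
  apply (f_equal (fun f => f k)) in H. unfold psub in H. lra. Qed.

Lemma psub_self {n} (x : point n) : normsq (psub x x) = 0.
Proof. unfold normsq, dot, psub. rewrite (fsum_ext n _ (fun k => 0 * (x k) + 0 * (x k))).
  rewrite fsum_lin2. ring. intros; ring. Qed.

Lemma dot_comm {n} (x y : point n) : dot x y = dot y x.
Proof. unfold dot. apply fsum_ext. intros; ring. Qed.

Lemma dot_sub {n} (a x y : point n) : dot a (psub x y) = dot a x - dot a y.
Proof. unfold dot, psub. rewrite (fsum_ext n _ (fun k => 1 * (a k * x k) + (-1) * (a k * y k))).
  rewrite fsum_lin2. ring. intros; ring. Qed.

Lemma normsq_psub {n} (x y : point n) : normsq (psub x y) = normsq x - 2 * dot x y + normsq y.
Proof. unfold normsq, dot, psub.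
  rewrite (fsum_ext n _ (fun k => 1 * (x k * x k) + (-2) * (x k * y k) + 1 * (y k * y k))).
  rewrite fsum_lin3. ring. intros; ring. Qed.

Lemma normsq_psub_sym {n} (x y : point n) : normsq (psub x y) = normsq (psub y x).
Proof. rewrite !normsq_psub, dot_comm. ring. Qed.

Definition rpt {n} (a : point n) (t : R) (x : point n) : point n :=
  fun k => x k - 2 * (dot a x - t) / normsq a * a k.

Lemma rpt_iso {n} (a : point n) t x y : normsq a <> 0 ->
  normsq (psub (rpt a t x) (rpt a t y)) = normsq (psub x y).
Proof. intros Ha. set (s := 2 * (dot a x - t) / normsq a). set (s' := 2 * (dot a y - t) / normsq a).
  set (d := psub x y).
  transitivity (fsum n (fun k => 1 * (d k * d k) + (-2 * (s - s')) * (d k * a k) + (s-s')^2 * (a k * a k))).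
  { unfold normsq, dot. apply fsum_ext. intros k. unfold d, psub, rpt. fold s. fold s'. ring. }
  rewrite fsum_lin3. fold (dot d d) (dot d a) (dot a a). fold (normsq d) (normsq a).
  rewrite (dot_comm d a). unfold d. rewrite dot_sub. unfold s, s'. field. auto. Qed.

Lemma rpt_fix {n} (a : point n) t x : dot a x = t -> rpt a t x = x.
Proof. intros H. apply functional_extensionality; intros k. unfold rpt. rewrite H.
  unfold Rdiv. ring. Qed.

Definition ipt {n} (c : point n) (r : R) (x : point n) : point n :=
  fun k => c k + r ^ 2 * (x k - c k) / normsq (psub x c).

Lemma ipt_c {n} (c : point n) r x : normsq (psub x c) <> 0 ->
  normsq (psub (ipt c r x) c) = r ^ 4 / normsq (psub x c).
Proof. intros H. set (al := normsq (psub x c)). set (X := psub x c).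
  transitivity (fsum n (fun k => (r^2/al)^2 * (X k * X k) + 0 * (X k) + 0 * (X k))).
  { unfold normsq at 1, dot. apply fsum_ext. intros k. unfold ipt. fold al. unfold X, psub. field. exact H. }
  rewrite fsum_lin3. fold (dot X X) (normsq X). unfold al, X. field. auto. Qed.

Lemma ipt_pair {n} (c : point n) r x y : normsq (psub x c) <> 0 -> normsq (psub y c) <> 0 ->
  normsq (psub (ipt c r x) (ipt c r y)) = r ^ 4 * normsq (psub x y) / (normsq (psub x c) * normsq (psub y c)).
Proof. intros H1 H2. set (al := normsq (psub x c)). set (be := normsq (psub y c)).
  set (X := psub x c). set (Y := psub y c).
  assert (E : normsq (psub x y) = normsq (psub X Y)).
  { unfold normsq, dot. apply fsum_ext. intros k; unfold X, Y, psub; ring. }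
  rewrite E, (normsq_psub X Y).
  transitivity (fsum n (fun k => (r^2/al)^2 * (X k * X k) + (-2 * (r^2/al) * (r^2/be)) * (X k * Y k) + (r^2/be)^2 * (Y k * Y k))).
  { unfold normsq at 1, dot. apply fsum_ext. intros k. unfold ipt. fold al be. unfold X, Y, psub. field. split; assumption. }
  rewrite fsum_lin3. fold (dot X X) (dot X Y) (dot Y Y) (normsq X) (normsq Y).
  unfold al, be. fold X Y. fold al be. field. auto. Qed.

Lemma ipt_invol {n} (c : point n) r x : r <> 0 -> normsq (psub x c) <> 0 ->
  ipt c r (ipt c r x) = x.
Proof. intros Hr H. apply functional_extensionality; intros k. unfold ipt at 1.
  rewrite ipt_c by auto. unfold ipt, psub. field. split; auto. Qed.

Definition D {n} (p q : ext n) : R :=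
  match p, q with Some x, Some y => normsq (psub x y) | None, None => 0 | _, _ => 1 end.

Lemma D_pos {n} (p q : ext n) : p <> q -> 0 < D p q.
Proof. destruct p as [x|], q as [y|]; simpl; intros H; try lra.
  - destruct (normsq_nonneg (psub x y)) as [h|h]; auto. symmetry in h. apply psub_zero in h. subst; tauto.
  - tauto. Qed.

Lemma D_self {n} (p : ext n) : D p p = 0.
Proof. destruct p; simpl; auto. apply psub_self. Qed.

Definition SP {n} (f : ext n -> ext n) := exists (c : R) (h : ext n -> R), 0 < c /\ (forall p, 0 < h p) /\
  forall p q, p <> q -> D (f p) (f q) = c * D p q / (h p * h q).

Lemma SP_refl {n} (a : point n) t : a <> (fun _ => 0) -> SP (reflection a t).
Proof. intros Ha. assert (Na : normsq a <> 0) by (intro E; apply normsq_zero in E; auto).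
  exists 1, (fun _ => 1). split; [lra|split; [intros; lra|]].
  intros [x|] [y|] H; simpl.
  - change (normsq (psub (rpt a t x) (rpt a t y)) = 1 * normsq (psub x y) / (1 * 1)).
    rewrite rpt_iso by auto. field.
  - field.
  - field.
  - tauto. Qed.

Definition hinv {n} (c : point n) (r : R) (p : ext n) : R :=
  match p with None => 1 | Some x =>
    if Req_EM_T (normsq (psub x c)) 0 then r ^ 4 else normsq (psub x c) end.

Lemma SP_inv {n} (c : point n) r : 0 < r -> SP (inversion c r).
Proof. intros Hr. assert (r4 : 0 < r ^ 4) by (apply pow_lt; auto).
  exists (r ^ 4), (hinv c r). split; auto. split.
  { intros [x|]; simpl; [|lra]. destruct (Req_EM_T _ 0); auto.
    pose proof (normsq_nonneg (psub x c)). lra. }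
  intros [x|] [y|] H; simpl.
  - destruct (Req_EM_T (normsq (psub x c)) 0) as [ex|ex];
    destruct (Req_EM_T (normsq (psub y c)) 0) as [ey|ey].
    + apply psub_zero in ex; apply psub_zero in ey; subst. tauto.
    + apply psub_zero in ex; subst. simpl. rewrite normsq_psub_sym. field. split; lra.
    + apply psub_zero in ey; subst. simpl. field. split; lra.
    + simpl. change (normsq (psub (ipt c r x) (ipt c r y)) =
         r ^ 4 * normsq (psub x y) / (normsq (psub x c) * normsq (psub y c))).
      apply ipt_pair; auto.
  - destruct (Req_EM_T (normsq (psub x c)) 0) as [ex|ex]; simpl.
    + field. lra.
    + change (normsq (psub (ipt c r x) c) = r ^ 4 * 1 / (normsq (psub x c) * 1)).
      rewrite ipt_c by auto. field. auto.
  - destruct (Req_EM_T (normsq (psub y c)) 0) as [ey|ey]; simpl.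
    + field. lra.
    + change (normsq (psub c (ipt c r y)) = r ^ 4 * 1 / (1 * normsq (psub y c))).
      rewrite normsq_psub_sym, ipt_c by auto. field. auto.
  - tauto. Qed.

Definition MP {n} (f : ext n -> ext n) := (forall p q, p <> q -> f p <> f q) /\
  forall p q r s, p <> q -> r <> s -> p <> r -> q <> s ->
    D p q * D r s * (D (f p) (f r) * D (f q) (f s)) = D p r * D q s * (D (f p) (f q) * D (f r) (f s)).

Lemma SP_MP {n} (f : ext n -> ext n) : SP f -> MP f.
Proof. intros (c & h & Hc & Hh & H). split.
  - intros p q Hpq E. pose proof (H p q Hpq). rewrite E, D_self in H0.
    pose proof (D_pos p q Hpq). pose proof (Hh p). pose proof (Hh q).
    assert (0 < c * D p q / (h p * h q)). { apply Rdiv_lt_0_compat; apply Rmult_lt_0_compat; auto. }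
    lra.
  - intros p q r s H1 H2 H3 H4. rewrite (H p r), (H q s), (H p q), (H r s) by auto.
    pose proof (Hh p). pose proof (Hh q). pose proof (Hh r). pose proof (Hh s).
    field. repeat split; lra. Qed.

Lemma MP_comp {n} (f g : ext n -> ext n) : MP f -> MP g -> MP (fun p => f (g p)).
Proof. intros [If Cf] [Ig Cg]. split.
  - intros p q H. apply If, Ig, H.
  - intros p q r s H1 H2 H3 H4.
    pose proof (Cg p q r s H1 H2 H3 H4) as A.
    pose proof (Cf (g p) (g q) (g r) (g s) (Ig _ _ H1) (Ig _ _ H2) (Ig _ _ H3) (Ig _ _ H4)) as Bq.
    set (X := D (g p) (g r) * D (g q) (g s)) in *.
    set (Y := D (g p) (g q) * D (g r) (g s)) in *.
    assert (HX : 0 < X). { unfold X. apply Rmult_lt_0_compat; apply D_pos; apply Ig; auto. }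
    apply (Rmult_eq_reg_r X); [|lra].
    transitivity (D p q * D r s * X * (D (f (g p)) (f (g r)) * D (f (g q)) (f (g s)))). ring.
    rewrite A. transitivity (D p r * D q s * (Y * (D (f (g p)) (f (g r)) * D (f (g q)) (f (g s))))). ring.
    rewrite Bq. ring. Qed.

Lemma mobius_MP {n} (f : ext n -> ext n) : is_mobius n f -> MP f.
Proof. induction 1.
  - apply SP_MP, SP_refl; auto.
  - apply SP_MP, SP_inv; auto.
  - apply MP_comp; auto. Qed.

Definition mob_or_id n (S : ext n -> ext n) := S = (fun p => p) \/ is_mobius n S.

Lemma equid_dot {n} (x z w : point n) : normsq (psub x z) = normsq (psub x w) ->
  dot (psub w z) x = (normsq w - normsq z) / 2.
Proof. intros H. rewrite !normsq_psub in H. rewrite dot_comm, dot_sub.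
  lra. Qed.

Lemma rpt_move {n} (z w : point n) : z <> w ->
  rpt (psub w z) ((normsq w - normsq z) / 2) z = w.
Proof. intros Hzw. set (a := psub w z).
  assert (Na : normsq a <> 0). { intro E. apply psub_zero in E. auto. }
  assert (E1 : dot a z = dot z w - normsq z). { unfold a. rewrite dot_comm, dot_sub. reflexivity. }
  assert (E2 : normsq a = normsq w - 2 * dot z w + normsq z). { unfold a. rewrite normsq_psub, dot_comm. reflexivity. }
  apply functional_extensionality; intros k. unfold rpt. rewrite E1.
  replace (2 * (dot z w - normsq z - (normsq w - normsq z) / 2) / normsq a) with (-1).
  - unfold a, psub. ring.
  - rewrite E2. rewrite E2 in Na. field. auto. Qed.

Lemma iso_ext n (w w' : nat -> point n) m :
  (forall i j, (i < j)%nat -> (j < m)%nat -> normsq (psub (w i) (w j)) = normsq (psub (w' i) (w' j))) ->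
  exists S g, mob_or_id n S /\ S None = None /\ (forall x, S (Some x) = Some (g x)) /\
    (forall x y, normsq (psub (g x) (g y)) = normsq (psub x y)) /\ forall i, (i < m)%nat -> g (w i) = w' i.
Proof. induction m; intros Hd.
  - exists (fun p => p), (fun x => x). repeat split; auto. left; auto. intros; lia.
  - destruct IHm as (S & g & HS & HN & HSo & Hg & Hw). { intros; apply Hd; lia. }
    set (z := g (w m)). destruct (classic (z = w' m)) as [Ez|Nz].
    + exists S, g. repeat split; auto. intros i Hi. destruct (Nat.eq_dec i m); [subst; auto|]. apply Hw; lia.
    + set (a := psub (w' m) z). set (t := (normsq (w' m) - normsq z) / 2).
      assert (Ha : a <> (fun _ => 0)). { intro E. apply Nz. apply functional_extensionality; intro k.
        apply (f_equal (fun f => f k)) in E. unfold a, psub in E. lra. }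
      assert (Na : normsq a <> 0) by (intro E; apply normsq_zero in E; auto).
      exists (fun p => reflection a t (S p)), (fun x => rpt a t (g x)). repeat split.
      * right. destruct HS as [->|HS]. exact (mob_refl n a t Ha). apply mob_comp; auto. apply mob_refl; auto.
      * rewrite HN. reflexivity.
      * intros x. rewrite HSo. reflexivity.
      * intros x y. rewrite rpt_iso by auto. apply Hg.
      * intros i Hi. destruct (Nat.eq_dec i m).
        { subst i. fold z. apply rpt_move. auto. }
        rewrite Hw by lia. apply rpt_fix. unfold a, t. apply equid_dot.
        transitivity (normsq (psub (w i) (w m))). { rewrite <- (Hw i) by lia. unfold z. apply Hg. } apply Hd; lia.
Qed.

Lemma key_u n (s : nat -> nat -> R) : (1 <= n)%nat ->
  (forall i j, (i <= n)%nat -> (j <= n)%nat -> i <> j -> 0 < s i j) ->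
  (forall i j, s i j = s j i) ->
  (forall a b c d, (a <= n)%nat -> (b <= n)%nat -> (c <= n)%nat -> (d <= n)%nat ->
     a <> b -> a <> c -> a <> d -> b <> c -> b <> d -> c <> d -> s a c * s b d = s a b * s c d) ->
  exists u : nat -> R, forall i j, (i <= n)%nat -> (j <= n)%nat -> i <> j -> exp (u i + u j) = s i j.
Proof. intros Hn Hp Hs Hc.
  destruct (Nat.eq_dec n 1) as [E1|N1].
  { subst n. exists (fun i => match i with O => ln (s 0%nat 1%nat) | _ => 0 end).
    intros i j Hi Hj Hij. assert (P := Hp 0%nat 1%nat ltac:(lia) ltac:(lia) ltac:(lia)).
    destruct i as [|[|i]]; destruct j as [|[|j]]; try lia.
    - rewrite Rplus_0_r, exp_ln; auto.
    - rewrite Rplus_0_l, exp_ln, Hs; auto. }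
  set (G := fun i => match i with O => s 0%nat 1%nat * s 0%nat 2%nat / s 1%nat 2%nat
                 | 1%nat => s 1%nat 0%nat * s 1%nat 2%nat / s 0%nat 2%nat
                 | _ => s i 0%nat * s i 1%nat / s 0%nat 1%nat end).
  assert (P01 := Hp 0%nat 1%nat ltac:(lia) ltac:(lia) ltac:(lia)).
  assert (P02 := Hp 0%nat 2%nat ltac:(lia) ltac:(lia) ltac:(lia)).
  assert (P12 := Hp 1%nat 2%nat ltac:(lia) ltac:(lia) ltac:(lia)).
  assert (GP : forall i, (i <= n)%nat -> 0 < G i).
  { intros i Hi. unfold G. rewrite (Hs 1%nat 0%nat).
    destruct i as [|[|i]]; apply Rdiv_lt_0_compat; try apply Rmult_lt_0_compat; auto; apply Hp; lia. }
  assert (GG : forall i j, (i < j)%nat -> (j <= n)%nat -> G i * G j = s i j * s i j).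
  { intros i j Hij Hj. unfold G.
    destruct i as [|[|i]]; destruct j as [|[|j]]; try lia.
    - rewrite (Hs 1%nat 0%nat). field. split; lra.
    - destruct (Nat.eq_dec j 0) as [->|Nj].
      + rewrite (Hs 2%nat 0%nat), (Hs 2%nat 1%nat). field. split; lra.
      + assert (H := Hc 0%nat (S (S j)) 2%nat 1%nat ltac:(lia) ltac:(lia) ltac:(lia) ltac:(lia)
           ltac:(lia) ltac:(lia) ltac:(lia) ltac:(lia) ltac:(lia) ltac:(lia)).
        rewrite (Hs 2%nat 1%nat) in H. rewrite (Hs (S (S j)) 0%nat).
        transitivity ((s 0%nat 2%nat * s (S (S j)) 1%nat) * s 0%nat (S (S j)) / s 1%nat 2%nat).
        field. split; lra. rewrite H. field. lra.
    - destruct (Nat.eq_dec j 0) as [->|Nj].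
      + rewrite (Hs 2%nat 0%nat), (Hs 2%nat 1%nat), (Hs 1%nat 0%nat). field. split; lra.
      + assert (H := Hc 1%nat (S (S j)) 2%nat 0%nat ltac:(lia) ltac:(lia) ltac:(lia) ltac:(lia)
           ltac:(lia) ltac:(lia) ltac:(lia) ltac:(lia) ltac:(lia) ltac:(lia)).
        rewrite (Hs 2%nat 0%nat) in H. rewrite (Hs (S (S j)) 1%nat), (Hs 1%nat 0%nat).
        transitivity ((s 1%nat 2%nat * s (S (S j)) 0%nat) * s 1%nat (S (S j)) / s 0%nat 2%nat).
        field. split; lra. rewrite H. field. lra.
    - assert (H1 := Hc (S (S i)) (S (S j)) 0%nat 1%nat ltac:(lia) ltac:(lia) ltac:(lia) ltac:(lia)
           ltac:(lia) ltac:(lia) ltac:(lia) ltac:(lia) ltac:(lia) ltac:(lia)).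
      assert (H2 := Hc (S (S i)) (S (S j)) 1%nat 0%nat ltac:(lia) ltac:(lia) ltac:(lia) ltac:(lia)
           ltac:(lia) ltac:(lia) ltac:(lia) ltac:(lia) ltac:(lia) ltac:(lia)).
      rewrite (Hs 1%nat 0%nat) in H2.
      transitivity ((s (S (S i)) 0%nat * s (S (S j)) 1%nat) * (s (S (S i)) 1%nat * s (S (S j)) 0%nat)
         / (s 0%nat 1%nat * s 0%nat 1%nat)). field. lra.
      rewrite H1, H2. field. lra. }
  exists (fun i => ln (G i) / 2). intros i j Hi Hj Hij.
  assert (Q : G i * G j = s i j * s i j).
  { destruct (Nat.lt_ge_cases i j). apply GG; auto.
    rewrite Rmult_comm, (Hs i j). apply GG; lia. }
  assert (Pi := GP i Hi). assert (Pj := GP j Hj). assert (Ps := Hp i j Hi Hj Hij).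
  set (e := exp (ln (G i) / 2 + ln (G j) / 2)).
  assert (Ee : e * e = G i * G j).
  { unfold e. rewrite <- exp_plus. replace (ln (G i) / 2 + ln (G j) / 2 + (ln (G i) / 2 + ln (G j) / 2))
      with (ln (G i) + ln (G j)) by field. rewrite exp_plus, !exp_ln; auto. }
  assert (0 < e) by apply exp_pos. rewrite Q in Ee. nra.
Qed.

Lemma ind_sum_out (c : R) i : forall n, (n < i)%nat ->
  sum_f_R0 (fun m => if Nat.eq_dec m i then c else 0) n = 0.
Proof. induction n; intros H; cbn [sum_f_R0].
  - destruct (Nat.eq_dec 0 i); [lia|auto].
  - rewrite IHn by lia. destruct (Nat.eq_dec (S n) i); [lia|ring]. Qed.

Lemma ind_sum (c : R) i : forall n, (i <= n)%nat ->
  sum_f_R0 (fun m => if Nat.eq_dec m i then c else 0) n = c.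
Proof. induction n; intros H; cbn [sum_f_R0].
  - destruct (Nat.eq_dec 0 i); [auto|lia].
  - destruct (Nat.eq_dec (S n) i).
    + rewrite ind_sum_out by lia. ring.
    + rewrite IHn by lia. ring. Qed.

Lemma nondeg_distinct n v : nondeg_simplex n v -> forall i j, (i <= n)%nat -> (j <= n)%nat -> i <> j ->
  0 < normsq (psub (v i) (v j)).
Proof. intros Hv i j Hi Hj Hij.
  destruct (normsq_nonneg (psub (v i) (v j))) as [h|h]; auto. symmetry in h. apply psub_zero in h.
  exfalso.
  set (lam := fun m => (if Nat.eq_dec m i then 1 else 0) - (if Nat.eq_dec m j then 1 else 0)).
  assert (L : lam i = 0).
  { apply (Hv lam); auto.
    - unfold lam. rewrite minus_sum, !ind_sum by auto. ring.
    - intros k. rewrite (sum_eq _ (fun m => (if Nat.eq_dec m i then v i k else 0) - (if Nat.eq_dec m j then v j k else 0))).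
      + rewrite minus_sum, !ind_sum by auto. rewrite h. ring.
      + intros m _. unfold lam. destruct (Nat.eq_dec m i), (Nat.eq_dec m j); subst; ring. }
  unfold lam in L. destruct (Nat.eq_dec i i), (Nat.eq_dec i j); try lia; lra.
Qed.

Theorem lemma3p1 (n : nat) (hn : (1 <= n)%nat) (v v' : nat -> point n)
  (hv : nondeg_simplex n v) (hv' : nondeg_simplex n v') :
  (exists u : nat -> R,
     forall i j : nat, (i <= n)%nat -> (j <= n)%nat -> i <> j ->
       edist (v' i) (v' j) = exp ((u i + u j) / 2) * edist (v i) (v j))
  <->
  (exists T : ext n -> ext n, is_mobius n T /\
     forall i : nat, (i <= n)%nat -> T (Some (v i)) = Some (v' i)).
Proof.
  pose proof (nondeg_distinct n v hv) as Pv.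
  pose proof (nondeg_distinct n v' hv') as Pv'.
  assert (NZ : forall i j, (i <= n)%nat -> (j <= n)%nat -> i <> j -> normsq (psub (v i) (v j)) <> 0).
  { intros. apply Rgt_not_eq, Pv; auto. }
  assert (NZ' : forall i j, (i <= n)%nat -> (j <= n)%nat -> i <> j -> normsq (psub (v' i) (v' j)) <> 0).
  { intros. apply Rgt_not_eq, Pv'; auto. }
  split.
  - intros [u Hu].
    assert (Dsq : forall i j, (i <= n)%nat -> (j <= n)%nat -> i <> j ->
      normsq (psub (v' i) (v' j)) = exp (u i + u j) * normsq (psub (v i) (v j))).
    { intros i j Hi Hj Hij. specialize (Hu i j Hi Hj Hij). unfold edist, pnorm in Hu.
      transitivity (sqrt (normsq (psub (v' i) (v' j))) * sqrt (normsq (psub (v' i) (v' j)))).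
      { symmetry; apply sqrt_sqrt, normsq_nonneg. }
      rewrite Hu.
      transitivity (exp ((u i + u j) / 2) * exp ((u i + u j) / 2) *
        (sqrt (normsq (psub (v i) (v j))) * sqrt (normsq (psub (v i) (v j))))). ring.
      rewrite sqrt_sqrt by apply normsq_nonneg. rewrite <- exp_plus.
      f_equal. f_equal. field. }
    set (r := exp (- u 0%nat / 2)).
    assert (Hr : 0 < r) by apply exp_pos.
    assert (R4 : r ^ 4 = / (exp (u 0%nat) * exp (u 0%nat))).
    { unfold r. replace (exp (- u 0%nat / 2) ^ 4) with
        (exp (- u 0%nat / 2 + - u 0%nat / 2) * exp (- u 0%nat / 2 + - u 0%nat / 2)) by (rewrite exp_plus; ring).
      replace (- u 0%nat / 2 + - u 0%nat / 2) with (- u 0%nat) by field.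
      rewrite exp_Ropp. field. apply Rgt_not_eq, exp_pos. }
    set (w := fun i => ipt (v 0%nat) r (v (S i))).
    set (w' := fun i => ipt (v' 0%nat) 1 (v' (S i))).
    assert (Hd : forall i j, (i < j)%nat -> (j < n)%nat ->
       normsq (psub (w i) (w j)) = normsq (psub (w' i) (w' j))).
    { intros i j Hij Hj. unfold w, w'.
      rewrite ipt_pair by (apply NZ; lia). rewrite ipt_pair by (apply NZ'; lia).
      rewrite (Dsq (S i) (S j)), (Dsq (S i) 0%nat), (Dsq (S j) 0%nat) by lia.
      rewrite !exp_plus, R4.
      assert (e0 := exp_pos (u 0%nat)). assert (ei := exp_pos (u (S i))). assert (ej := exp_pos (u (S j))).
      assert (ni := NZ (S i) 0%nat ltac:(lia) ltac:(lia) ltac:(lia)).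
      assert (nj := NZ (S j) 0%nat ltac:(lia) ltac:(lia) ltac:(lia)).
      field. repeat split; lra || auto. }
    destruct (iso_ext n w w' n Hd) as (Sm & g & HS & HN & HSo & Hg & Hw).
    exists (fun p => inversion (v' 0%nat) 1 (Sm (inversion (v 0%nat) r p))). split.
    + destruct HS as [->|HS].
      * exact (mob_comp n _ _ (mob_inv n (v' 0%nat) 1 Rlt_0_1) (mob_inv n (v 0%nat) r Hr)).
      * exact (mob_comp n _ _ (mob_inv n (v' 0%nat) 1 Rlt_0_1) (mob_comp n _ _ HS (mob_inv n (v 0%nat) r Hr))).
    + intros i Hi. destruct i as [|i].
      * assert (E0 : inversion (v 0%nat) r (Some (v 0%nat)) = None).
        { unfold inversion. destruct (Req_EM_T _ 0) as [e|e]; auto. exfalso; apply e, psub_self. }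
        rewrite E0, HN. reflexivity.
      * assert (E1 : inversion (v 0%nat) r (Some (v (S i))) = Some (w i)).
        { unfold inversion. destruct (Req_EM_T _ 0) as [e|e]; [exfalso; exact (NZ (S i) 0%nat ltac:(lia) ltac:(lia) ltac:(lia) e) | reflexivity]. }
        rewrite E1, HSo, Hw by lia. unfold w'.
        assert (ni := NZ' (S i) 0%nat ltac:(lia) ltac:(lia) ltac:(lia)).
        unfold inversion. destruct (Req_EM_T _ 0) as [e|e].
        { exfalso. rewrite ipt_c in e by auto. apply Rmult_integral in e. destruct e as [e|e].
          - lra. - apply Rinv_neq_0_compat in ni. auto. }
        change (Some (ipt (v' 0%nat) 1 (ipt (v' 0%nat) 1 (v' (Datatypes.S i)))) = Some (v' (Datatypes.S i))).
        rewrite ipt_invol; auto.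
  - intros (T & HT & HTv). destruct (mobius_MP T HT) as [_ Hcr].
    set (s := fun a b => normsq (psub (v' a) (v' b)) / normsq (psub (v a) (v b))).
    assert (Sneq : forall a b, (a <= n)%nat -> (b <= n)%nat -> a <> b -> Some (v a) <> Some (v b)).
    { intros a b Ha Hb Hab E. inversion E as [E']. apply (NZ a b Ha Hb Hab). rewrite E'. apply psub_self. }
    destruct (key_u n s hn) as [u Hu].
    + intros i j Hi Hj Hij. unfold s. apply Rdiv_lt_0_compat; auto.
    + intros i j. unfold s. rewrite (normsq_psub_sym (v' i)), (normsq_psub_sym (v i)). reflexivity.
    + intros a b c d Ha Hb Hc Hd H1 H2 H3 H4 H5 H6.
      specialize (Hcr (Some (v a)) (Some (v b)) (Some (v c)) (Some (v d))
        (Sneq a b Ha Hb H1) (Sneq c d Hc Hd H6) (Sneq a c Ha Hc H2) (Sneq b d Hb Hd H5)).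
      rewrite !HTv in Hcr by auto. cbn [D] in Hcr. unfold s.
      assert (n1 := NZ a b Ha Hb H1). assert (n2 := NZ c d Hc Hd H6).
      assert (n3 := NZ a c Ha Hc H2). assert (n4 := NZ b d Hb Hd H5).
      transitivity (normsq (psub (v a) (v b)) * normsq (psub (v c) (v d)) *
        (normsq (psub (v' a) (v' c)) * normsq (psub (v' b) (v' d))) /
        (normsq (psub (v a) (v b)) * normsq (psub (v c) (v d)) * normsq (psub (v a) (v c)) * normsq (psub (v b) (v d)))).
      { field. repeat split; auto. }
      rewrite Hcr. field. repeat split; auto.
    + exists u. intros i j Hi Hj Hij. specialize (Hu i j Hi Hj Hij). unfold s in Hu.
      unfold edist, pnorm. set (E := exp ((u i + u j) / 2)).
      assert (EE : E * E = exp (u i + u j)). { unfold E. rewrite <- exp_plus. f_equal. field. }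
      assert (HE : 0 < E) by apply exp_pos.
      replace (normsq (psub (v' i) (v' j))) with ((E * E) * normsq (psub (v i) (v j))).
      * rewrite sqrt_mult, sqrt_square; try lra; try nra. apply normsq_nonneg.
      * rewrite EE, Hu. field. apply NZ; auto.
Qed.
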